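(* For every even $n\ge 2$ and every integer $1\le k\le\frac n2$, $$\sum_{j=0}^{k}\frac{q^{(n-1)j-1}-1}{q-1}\binom{n/2}{j}_{q^2}q^{2(k-j)^2-(k-j)}\frac{(q^{n+2-4k+2j};q^2)_{2k-2j}}{(q;q)_{2k-2j}}=\frac{q^{2k^2-k-1}-1}{q-1}\binom{n}{2k}_q$$ as an identity of rational functions in $q$.
   Context: $(x;t)_m=\prod_{j=0}^{m-1}(1-xt^j)$ and $\binom{c}{d}_t=\prod_{j=0}^{d-1}\frac{1-t^{c-j}}{1-t^{j+1}}$. *)

(* Defs.v *)
From mathcomp Require Import all_boot all_order all_algebra.
From mathcomp Require Import fraction.
Set Implicit Arguments. Unset Strict Implicit. Unset Printing Implicit Defensive.
Import Order.TTheory GRing.Theory Num.Theory.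
Local Open Scope ring_scope.

Definition qpoch (F : fieldType) (x t : F) (m : nat) : F :=
  \prod_(j < m) (1 - x * t ^+ j).

Definition qbinom (F : fieldType) (t : F) (c d : nat) : F :=
  \prod_(j < d) ((1 - t ^ (c%:Z - j%:Z)) / (1 - t ^+ j.+1)).

Definition ratfun := {fraction {poly rat}}.
Definition qvar : ratfun := @FracField.tofrac _ ('X : {poly rat}).

(* Main.v *)
Require Import Defs.
From mathcomp Require Import all_boot all_order all_algebra.
From mathcomp Require Import fraction.
From mathcomp Require Import ring zify.
Import GRing.Theory Num.Theory.
Local Open Scope ring_scope.

Set Implicit Arguments.
Unset Strict Implicit.

Definition pq (F : fieldType) (t : F) n := \prod_(i < n) (1 - t ^+ i.+1).
Definition Gb (F : fieldType) (Q : F) k r :=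
  \prod_(i < r) ((1 - Q ^+ (k - i)) / (1 - Q ^+ i.+1)).
Definition Pp (F : fieldType) (Q x c : F) r :=
  Q ^+ 'C(r, 2) * \prod_(i < r) (c * Q ^+ i - x).
Definition Rr (F : fieldType) (Q c : F) r k :=
  \prod_(i < k - r) (1 - c * Q ^+ (r + i)).
Definition po (F : fieldType) (x Q : F) k := \prod_(i < k) (1 - x * Q ^+ i).

Lemma Gb0 (F : fieldType) (Q : F) k : Gb Q k 0 = 1.
Proof. by rewrite /Gb big_ord0. Qed.

Lemma GbS (F : fieldType) (Q : F) k r :
  Gb Q k r.+1 = Gb Q k r * ((1 - Q ^+ (k - r)) / (1 - Q ^+ r.+1)).
Proof. by rewrite /Gb big_ord_recr. Qed.

Lemma Gb_gt (F : fieldType) (Q : F) k r : (k < r)%N -> Gb Q k r = 0.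
Proof.
move=> kr; rewrite /Gb (bigD1 (Ordinal kr)) //= subnn expr0 subrr mul0r.
by rewrite mul0r.
Qed.

Lemma GbSS (F : fieldType) (Q : F) k r :
  Gb Q k.+1 r.+1 = Gb Q k r * ((1 - Q ^+ k.+1) / (1 - Q ^+ r.+1)).
Proof.
elim: r => [|r IH].
  by rewrite GbS !Gb0 subn0.
rewrite GbS IH GbS subSS.
ring.
Qed.

Lemma pascal1 (F : fieldType) (Q : F) (hQ : forall i, 1 - Q ^+ i.+1 != 0) k r :
  Gb Q k.+1 r.+1 = Gb Q k r.+1 + Q ^+ (k - r) * Gb Q k r.
Proof.
case: (ltnP k r) => kr.
  by rewrite !Gb_gt ?mulr0 ?addr0 // ltnS ltnW.
rewrite GbSS GbS.
have e : Q ^+ k.+1 = Q ^+ (k - r) * Q ^+ r.+1 by rewrite -exprD addnS subnK.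
rewrite e; field; exact: hQ.
Qed.

Lemma pascal2 (F : fieldType) (Q : F) (hQ : forall i, 1 - Q ^+ i.+1 != 0) k r :
  Gb Q k.+1 r.+1 = Q ^+ r.+1 * Gb Q k r.+1 + Gb Q k r.
Proof.
case: (ltnP k r) => kr.
  by rewrite !Gb_gt ?mulr0 ?add0r // ltnS ltnW.
rewrite GbSS GbS.
have e : Q ^+ k.+1 = Q ^+ r.+1 * Q ^+ (k - r) by rewrite -exprD addSn subnKC.
rewrite e; field; exact: hQ.
Qed.

Lemma PpS (F : fieldType) (Q x c : F) r :
  Pp Q x c r.+1 = Q ^+ r * (c - x) * Pp Q x (c * Q) r.
Proof.
rewrite /Pp big_ord_recl /= expr0 mulr1 binS bin1 exprD.
under [X in _ * (_ * X)]eq_bigr => i _ do rewrite /bump /= add1n exprS mulrA.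
ring.
Qed.



Lemma RrS (F : fieldType) (Q c : F) r k :
  Rr Q c r.+1 k.+1 = Rr Q (c * Q) r k.
Proof.
rewrite /Rr subSS; apply: eq_bigr => i _.
by rewrite addSn exprS mulrA.
Qed.

Lemma Rr_last (F : fieldType) (Q c : F) r k : (r <= k)%N ->
  Rr Q c r k.+1 = Rr Q c r k * (1 - c * Q ^+ k).
Proof.
move=> rk; rewrite /Rr subSn // big_ord_recr /= subnKC //.
Qed.

Lemma Wid (F : fieldType) (Q x : F) (hQ : forall i, 1 - Q ^+ i.+1 != 0) k :
  forall c, po x Q k = \sum_(r < k.+1) Gb Q k r * Pp Q x c r * Rr Q c r k.
Proof.
elim: k => [|k IH] c.
  by rewrite big_ord_recl big_ord0 /po /Pp /Rr !big_ord0 Gb0 /=; ring.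
have E1 : \sum_(r < k.+2) Gb Q k r * Pp Q x c r * Rr Q c r k.+1
          = (1 - c * Q ^+ k) * po x Q k.
  rewrite big_ord_recr /= Gb_gt // mul0r mul0r addr0 (IH c) big_distrr /=.
  apply: eq_bigr => i _; have hi := ltn_ord i; rewrite Rr_last //; ring.
have E2 : \sum_(r < k.+1) Q ^+ (k - r) * Gb Q k r * Pp Q x c r.+1 * Rr Q c r.+1 k.+1
          = Q ^+ k * (c - x) * po x Q k.
  rewrite (IH (c * Q)) big_distrr /=.
  apply: eq_bigr => i _; rewrite PpS RrS.
  have hi := ltn_ord i.
  have e : Q ^+ k = Q ^+ (k - i) * Q ^+ i by rewrite -exprD subnK.
  rewrite e; ring.
rewrite big_ord_recl /=.
under eq_bigr => i _ do rewrite /bump /= add1n pascal1 // mulrDl mulrDl.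
rewrite big_split /= addrA.
have -> : Gb Q k.+1 0 * Pp Q x c 0 * Rr Q c 0 k.+1 = Gb Q k 0 * Pp Q x c 0 * Rr Q c 0 k.+1
  by rewrite !Gb0.
rewrite -(big_ord_recl k.+1 (fun r : 'I_k.+2 => Gb Q k r * Pp Q x c r * Rr Q c r k.+1)).
rewrite E1.
rewrite E2 /po big_ord_recr /=; ring.
Qed.

Lemma W2id (F : fieldType) (Q x : F) (hQ : forall i, 1 - Q ^+ i.+1 != 0) k :
  forall c, \sum_(r < k.+1) Gb Q k r * Pp Q x c r * Rr Q c r k
              * (Q ^+ (k.-1 * (k - r)) * x ^+ (k - r))
            = c ^+ k * Q ^+ (k * k.-1) * po x Q k.
Proof.
elim: k => [|k IH] c.
  by rewrite big_ord_recl big_ord0 /po /Pp /Rr !big_ord0 Gb0 /=; ring.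
rewrite [k.+1.-1]/=.
have E1 : \sum_(r < k.+2) Q ^+ r * Gb Q k r * Pp Q x c r * Rr Q c r k.+1
               * (Q ^+ (k * (k.+1 - r)) * x ^+ (k.+1 - r))
          = (1 - c * Q ^+ k) * (Q ^+ k * Q ^+ k) * x * (c ^+ k * Q ^+ (k * k.-1) * po x Q k).
  rewrite big_ord_recr /= Gb_gt // mulr0 !mul0r addr0 -(IH c) !big_distrr /=.
  apply: eq_bigr => i _; have hi := ltn_ord i; rewrite Rr_last //.
  have e1 : (k.+1 - i = (k - i).+1)%N by rewrite subSn.
  have e2 : Q ^+ i * Q ^+ (k * (k - i).+1) = Q ^+ k * Q ^+ k * Q ^+ (k.-1 * (k - i)).
    rewrite -!exprD; congr (_ ^+ _); nia.
  rewrite e1 [x ^+ _.+1]exprS.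
  transitivity ((Q ^+ i * Q ^+ (k * (k - i).+1)) * Gb Q k i * Pp Q x c i * Rr Q c i k
      * (1 - c * Q ^+ k) * x * x ^+ (k - i)); first by ring.
  rewrite e2; ring.
have E2 : \sum_(r < k.+1) Gb Q k r * Pp Q x c r.+1 * Rr Q c r.+1 k.+1
               * (Q ^+ (k * (k.+1 - r.+1)) * x ^+ (k.+1 - r.+1))
          = Q ^+ k * (c - x) * ((c * Q) ^+ k * Q ^+ (k * k.-1) * po x Q k).
  rewrite -(IH (c * Q)) big_distrr /=.
  apply: eq_bigr => i _; have hi := ltn_ord i; rewrite PpS RrS subSS.
  have e2 : Q ^+ i * Q ^+ (k * (k - i)) = Q ^+ k * Q ^+ (k.-1 * (k - i)).
    rewrite -!exprD; congr (_ ^+ _); nia.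
  transitivity (Q ^+ i * Q ^+ (k * (k - i)) * (c - x) * Gb Q k i * Pp Q x (c * Q) i
     * Rr Q (c * Q) i k * x ^+ (k - i)); first by ring.
  rewrite e2; ring.
rewrite big_ord_recl /=.
under eq_bigr => i _ do rewrite /bump /= add1n pascal2 // mulrDl mulrDl mulrDl.
rewrite big_split /= addrA.

have -> : Gb Q k.+1 0 * Pp Q x c 0 * Rr Q c 0 k.+1 * (Q ^+ (k * (k.+1 - 0)) * x ^+ (k.+1 - 0))
   = Q ^+ 0 * Gb Q k 0 * Pp Q x c 0 * Rr Q c 0 k.+1 * (Q ^+ (k * (k.+1 - 0)) * x ^+ (k.+1 - 0)).
  by rewrite !Gb0 expr0 !mul1r.
rewrite -(big_ord_recl k.+1 (fun r : 'I_k.+2 => Q ^+ r * Gb Q k r * Pp Q x c r * Rr Q c r k.+1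
               * (Q ^+ (k * (k.+1 - r)) * x ^+ (k.+1 - r)))).
rewrite E1 E2 /po big_ord_recr /=.
have e3 : Q ^+ (k.+1 * k) = Q ^+ (k * k.-1) * Q ^+ k * Q ^+ k.
  by rewrite -!exprD; congr (_ ^+ _); nia.
rewrite e3 exprMn exprS; ring.
Qed.


Definition oddp (F : fieldType) (q : F) n := \prod_(i < n) (1 - q * (q ^+ 2) ^+ i).

Lemma solve1 (F : fieldType) (X A C : F) : A != 0 -> X * A = C -> X = C / A.
Proof. by move=> hA <-; rewrite mulfK. Qed.

Lemma pq_ne0 (F : fieldType) (t : F) (h : forall i, 1 - t ^+ i.+1 != 0) n : pq t n != 0.
Proof. by apply/prodf_neq0 => i _; apply: h. Qed.

Lemma hQ_of (F : fieldType) (q : F) (h : forall i, 1 - q ^+ i.+1 != 0) i :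
  1 - (q ^+ 2) ^+ i.+1 != 0.
Proof. by rewrite -exprM mulnS addSn; apply: h. Qed.

Lemma oddp_ne0 (F : fieldType) (q : F) (h : forall i, 1 - q ^+ i.+1 != 0) n : oddp q n != 0.
Proof. by apply/prodf_neq0 => i _; rewrite -exprM -exprS; apply: h. Qed.

Lemma pq2 (F : fieldType) (q : F) n : pq q (2 * n) = oddp q n * pq (q ^+ 2) n.
Proof.
elim: n => [|n IH]; first by rewrite /pq /oddp !big_ord0 mulr1.
rewrite /pq mulnS !big_ord_recr /= -/(pq q (2 * n)) IH /oddp big_ord_recr /=.
rewrite -/(pq (q ^+ 2) n) -!exprM -exprS mulnS addSn; ring.
Qed.

Lemma Gb_pq (F : fieldType) (Q : F) (hQ : forall i, 1 - Q ^+ i.+1 != 0) k r :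
  (r <= k)%N -> Gb Q k r * pq Q r * pq Q (k - r) = pq Q k.
Proof.
elim: r => [|r IH] rk; first by rewrite Gb0 /pq big_ord0 subn0 !mul1r.
rewrite GbS.
rewrite -(IH (ltnW rk)).
have e : (k - r = (k - r.+1).+1)%N by rewrite subnSK.
rewrite /pq big_ord_recr /= e big_ord_recr /= -e.
field. exact: hQ. Qed.

Lemma po_pq (F : fieldType) (Q : F) b l :
  po (Q ^+ b.+1) Q l * pq Q b = pq Q (b + l).
Proof.
elim: l => [|l IH]; first by rewrite /po big_ord0 mul1r addn0.
rewrite /po big_ord_recr /= -/(po _ Q l) addnS /pq big_ord_recr /= -/(pq Q (b + l)) -IH.
rewrite -exprD addSn -/(pq Q b); ring.
Qed.

Lemma Pp_pq (F : fieldType) (Q c : F) a r : (r <= a)%N ->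
  Pp Q (c * Q ^+ a) c r * pq Q (a - r) = c ^+ r * Q ^+ 'C(r, 2) * Q ^+ 'C(r, 2) * pq Q a.
Proof.
elim: r => [|r IH] ra; first by rewrite /Pp big_ord0 subn0 bin0n !expr0; ring.
have e : (a - r = (a - r.+1).+1)%N by rewrite subnSK.
move: (IH (ltnW ra)); rewrite /Pp big_ord_recr /= e /pq big_ord_recr /= -/(pq Q (a - r.+1)).
rewrite -e binS bin1 => H.
have e2 : Q ^+ a = Q ^+ r * Q ^+ (a - r) by rewrite -exprD subnKC // ltnW.
have e3 : c * Q ^+ r - c * Q ^+ a = c * Q ^+ r * (1 - Q ^+ (a - r)) by rewrite e2; ring.
rewrite e3.
set A := \prod_(i < r) (c * Q ^+ i - c * Q ^+ a).
transitivity (c * Q ^+ r * Q ^+ r * (Q ^+ 'C(r, 2) * A * (pq Q (a - r.+1) * (1 - Q ^+ (a - r))))).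
  rewrite exprD; ring.
rewrite H exprD exprS; ring.
Qed.

Lemma Pp0 (F : fieldType) (Q c : F) a r : (a < r)%N -> Pp Q (c * Q ^+ a) c r = 0.
Proof.
move=> ar; rewrite /Pp (bigD1 (Ordinal ar)) //= subrr mul0r mulr0 //.
Qed.

Lemma oddp_split (F : fieldType) (q : F) a l :
  oddp q (a + l) = oddp q a * \prod_(i < l) (1 - q * (q ^+ 2) ^+ (a + i)).
Proof. by rewrite /oddp big_split_ord. Qed.

Lemma Rr_oddp (F : fieldType) (q : F) r k : (r <= k)%N ->
  Rr (q ^+ 2) q r k * oddp q r = oddp q k.
Proof. by move=> rk; rewrite -{2}(subnKC rk) oddp_split /Rr mulrC. Qed.

Lemma oddp_po (F : fieldType) (q : F) a k :
  oddp q (a + k) = oddp q a * po (q * (q ^+ 2) ^+ a) (q ^+ 2) k.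
Proof.
rewrite oddp_split /po; congr (_ * _); apply: eq_bigr => i _; by rewrite exprD mulrA.
Qed.

Lemma qbinom_Gb (F : fieldType) (t : F) c d : (d <= c)%N -> qbinom t c d = Gb t c d.
Proof.
move=> dc; rewrite /qbinom /Gb; apply: eq_bigr => i _.
have ic : (i <= c)%N by apply: leq_trans (ltnW (ltn_ord i)) dc.
by rewrite subzn // -exprnP.
Qed.

Lemma qpoch_pq (F : fieldType) (q : F) l : qpoch q q l = pq q l.
Proof. by rewrite /qpoch /pq; apply: eq_bigr => i _; rewrite exprS. Qed.


Lemma term (F : fieldType) (q : F) (hq : forall i, 1 - q ^+ i.+1 != 0) (hq0 : q != 0)
  k a r (e : int) :
  (r <= k)%N -> e = (2 * a + 2)%:Z - (2 * r)%:Z ->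
  qbinom (q ^+ 2) (k + a) (k - r) * q ^+ (r + 'C(r, 2) * 4)
    * qpoch (q ^ e) (q ^+ 2) (2 * r) / qpoch q q (2 * r) * oddp q k
  = pq (q ^+ 2) (k + a) / (pq (q ^+ 2) k * pq (q ^+ 2) a)
    * (Gb (q ^+ 2) k r * Pp (q ^+ 2) (q * (q ^+ 2) ^+ a) q r * Rr (q ^+ 2) q r k).
Proof.
move=> rk ->.
have hQ := hQ_of hq.
rewrite qbinom_Gb; last by apply: leq_trans (leq_subr r k) (leq_addr a k).
rewrite [qpoch q q _]qpoch_pq pq2.
case: (leqP r a) => ra.
  have eQ : q ^ ((2 * a + 2)%:Z - (2 * r)%:Z) = (q ^+ 2) ^+ (a - r).+1.
    rewrite subzn; last by lia.
    rewrite -exprnP -exprM; congr (_ ^+ _); lia.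
  rewrite eQ.
  have Hpo := po_pq (q ^+ 2) (a - r) (2 * r).
  have Hg1 := Gb_pq hQ (leq_trans (leq_subr r k) (leq_addr a k)).
  have Hg2 := Gb_pq hQ rk.
  have Hp := Pp_pq (q ^+ 2) q ra.
  have Hr := Rr_oddp q rk.
  have n1 : (a - r + 2 * r = a + r)%N by lia.
  have n2 : (k + a - (k - r) = a + r)%N by lia.
  rewrite n1 in Hpo; rewrite n2 in Hg1.
  have ex : q ^+ (r + 'C(r, 2) * 4) = q ^+ r * (q ^+ 2) ^+ 'C(r, 2) * (q ^+ 2) ^+ 'C(r, 2).
    rewrite -!exprM -!exprD; congr (_ ^+ _); lia.
  rewrite ex.
  have nz := pq_ne0 hQ.
  have nzo := oddp_ne0 hq.
  move: Hg1; rewrite -mulrA => /solve1 -> //; last by rewrite mulf_neq0.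
  move: Hg2; rewrite -mulrA => /solve1 -> //; last by rewrite mulf_neq0.
  move: Hp => /solve1 -> //.
  move: Hr => /solve1 -> //.
  change (qpoch ((q ^+ 2) ^+ (a - r).+1) (q ^+ 2) (2 * r)) with
         (po ((q ^+ 2) ^+ (a - r).+1) (q ^+ 2) (2 * r)).
  move: Hpo => /solve1 -> //.
  field.
  by rewrite !nz !nzo.
rewrite Pp0 // mulr0 mul0r.
have i0 : (r - a - 1 < 2 * r)%N by lia.
rewrite /qpoch (bigD1 (Ordinal i0)) //= -exprM [q ^+ (2 * _)]exprnP -expfzDr //.
have h : (2 * a + 2 + 2 * (r - a - 1) = 2 * r)%N by lia.
have -> : ((2 * a + 2)%:Z - (2 * r)%:Z + (2 * (r - a - 1))%:Z = 0)%R.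
  by rewrite -h PoszD; ring.
by rewrite expr0z subrr !(mul0r, mulr0).
Qed.


Lemma bin2_4 r : ('C(r, 2) * 4 + 2 * r = 2 * r * r)%N.
Proof.
elim: r => [|r IH] //; rewrite binS bin1; nia.
Qed.

Lemma qvar_ne0 : qvar != 0.
Proof. by rewrite /qvar tofrac_eq0 polyX_eq0. Qed.

Lemma qvar_h i : 1 - qvar ^+ i.+1 != 0.
Proof.
rewrite /qvar -tofracXn -tofrac1 -tofracB tofrac_eq0 subr_eq0 eq_sym.
apply/eqP => /(congr1 (fun p : {poly rat} => size p)).
by rewrite size_polyXn size_poly1.
Qed.

Lemma solve2 (F : fieldType) (X A C : F) : X * A = C -> A != 0 -> X = C / A.
Proof. by move=> <- hA; rewrite mulfK. Qed.

Lemma fidB (F : fieldType) (oa p P ok pk pa : F) :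
  ok != 0 -> pk != 0 -> oa != 0 -> pa != 0 ->
  oa * p * P / (ok * pk * (oa * pa)) * ok = P / (pk * pa) * p.
Proof. by move=> h1 h2 h3 h4; field; rewrite h1 h2 h3 h4. Qed.

Lemma e_a k : (2 * k * k - k = k + 2 * (k * k.-1))%N.
Proof. nia. Qed.

Lemma e_b (F : fieldType) (q : F) n k a i : n = (2 * (k + a))%N -> (1 <= k)%N ->
  q ^+ ((n - 1) * i) = (q ^+ 2) ^+ (k.-1 * i) * (q * (q ^+ 2) ^+ a) ^+ i.
Proof.
move=> -> k1; rewrite exprMn -!exprM -exprS -exprM -!exprD; congr (_ ^+ _); nia.
Qed.

Lemma e_c k : (1 <= k)%N -> 2 * k%:Z ^+ 2 - k%:Z - 1 = (2 * k * k - k)%N%:Z + (-1) :> int.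
Proof. move=> k1; rewrite expr2; nia. Qed.

Unset Implicit Arguments.
Set Strict Implicit.

Theorem mainTheorem10 (n k : nat) :
  ~~ odd n -> (2 <= n)%N -> (1 <= k)%N -> (k <= n %/ 2)%N ->
  \sum_(j < k.+1)
     ((qvar ^ ((n%:Z - 1) * j%:Z - 1) - 1) / (qvar - 1)
      * qbinom (qvar ^+ 2) (n %/ 2) j
      * qvar ^ (2 * (k%:Z - j%:Z) ^+ 2 - (k%:Z - j%:Z))
      * qpoch (qvar ^ (n%:Z + 2 - 4 * k%:Z + 2 * j%:Z)) (qvar ^+ 2) (2 * k - 2 * j)
      / qpoch qvar qvar (2 * k - 2 * j))
  = (qvar ^ (2 * k%:Z ^+ 2 - k%:Z - 1) - 1) / (qvar - 1) * qbinom qvar n (2 * k).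
Proof.
move=> nodd n2 k1 kn.
have hq0 := qvar_ne0.
have hq := qvar_h.
have hQ := hQ_of hq.
set m := (n %/ 2)%N in kn *.
have nE : n = (2 * m)%N.
  by rewrite /m divn2 -[in LHS](even_halfK nodd) -mul2n.
set a := (m - k)%N.
have mE : m = (k + a)%N by rewrite /a; lia.
set q := qvar in hq0 hq hQ *.
set T := fun j : nat => qbinom (q ^+ 2) m j
      * q ^ (2 * (k%:Z - j%:Z) ^+ 2 - (k%:Z - j%:Z))
      * qpoch (q ^ (n%:Z + 2 - 4 * k%:Z + 2 * j%:Z)) (q ^+ 2) (2 * k - 2 * j)
      / qpoch q q (2 * k - 2 * j).
set B := qbinom q n (2 * k).
have step1 : forall j : 'I_k.+1,
   (q ^ ((n%:Z - 1) * j%:Z - 1) - 1) / (q - 1)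
      * qbinom (q ^+ 2) m j
      * q ^ (2 * (k%:Z - j%:Z) ^+ 2 - (k%:Z - j%:Z))
      * qpoch (q ^ (n%:Z + 2 - 4 * k%:Z + 2 * j%:Z)) (q ^+ 2) (2 * k - 2 * j)
      / qpoch q q (2 * k - 2 * j)
   = (q^-1 * (q ^+ ((n - 1) * j) * T j) - T j) / (q - 1).
  move=> j.
  have -> : (n%:Z - 1) * j%:Z - 1 = ((n - 1) * j)%N%:Z + (-1) :> int.
    by rewrite PoszM subzn; [ring | lia].
  rewrite expfzDr // exprN1 -exprnP /T; ring.
rewrite (eq_bigr _ (fun j _ => step1 j)) -mulr_suml sumrB -mulr_sumr.
set Q := q ^+ 2.
set x := q * Q ^+ a.
set Cc := pq Q m / (pq Q k * pq Q a).
have Tr : forall r, (r <= k)%N ->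
    T (k - r)%N * oddp q k = Cc * (Gb Q k r * Pp Q x q r * Rr Q q r k).
  move=> r rk; rewrite /T.
  have -> : (2 * k - 2 * (k - r) = 2 * r)%N by lia.
  have -> : k%:Z - (k - r)%N%:Z = r%:Z by lia.
  have -> : 2 * r%:Z ^+ 2 - r%:Z = (r + 'C(r, 2) * 4)%N%:Z.
    move: (bin2_4 r); set c := 'C(r, 2); rewrite -mulnA expr2 -PoszM.
    move: (r * r)%N => rr h; lia.
  rewrite -exprnP /Cc /x /Q mE.
  have -> : n%:Z + 2 - 4 * k%:Z + 2 * (k - r)%N%:Z = (2 * a + 2)%N%:Z - (2 * r)%N%:Z by lia.
  exact: (@term _ q hq hq0 k a r _ rk).
have Bo : B * oddp q k = Cc * po x Q k.
  have kn2 : (2 * k <= n)%N by lia.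
  have H := Gb_pq hq kn2.
  have e1 : (n - 2 * k = 2 * a)%N by lia.
  rewrite e1 in H.
  rewrite /B qbinom_Gb //.
  rewrite [in pq q n]nE in H.
  rewrite !pq2 -/Q in H.
  have nz := pq_ne0 hQ.
  have nzo := oddp_ne0 hq.
  rewrite -mulrA in H.
  rewrite (solve2 H (mulf_neq0 (mulf_neq0 (nzo k) (nz k)) (mulf_neq0 (nzo a) (nz a)))).
  rewrite /Cc mE (addnC k a) oddp_po -/Q -/x.
  exact: (fidB _ _ (nzo k) (nz k) (nzo a) (nz a)).
have S0 : \sum_(j < k.+1) T j = B.
  apply: (mulIf (oddp_ne0 hq k)).
  rewrite Bo mulr_suml (reindex_inj rev_ord_inj) /=.
  rewrite (Wid x hQ k q) mulr_sumr; apply: eq_bigr => i _.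
  have ik : (i <= k)%N by rewrite -ltnS.
  by rewrite subSS Tr.
have nEa : n = (2 * (k + a))%N by rewrite nE mE.
have S1 : \sum_(j < k.+1) q ^+ ((n - 1) * j) * T j = q ^+ (2 * k * k - k) * B.
  apply: (mulIf (oddp_ne0 hq k)).
  rewrite -mulrA Bo mulr_suml (reindex_inj rev_ord_inj) /=.
  rewrite e_a exprD exprM -/Q.
  rewrite mulrCA -(W2id x hQ k q) mulr_sumr; apply: eq_bigr => i _.
  have ik : (i <= k)%N by rewrite -ltnS.
  rewrite subSS.
  rewrite -[LHS]mulrA Tr // (@e_b _ q n k a (k - i) nEa k1) -/Q -/x.
  ring.
rewrite S0 S1 (e_c k1) expfzDr // exprN1 -exprnP; ring.
Qed.
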